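(* Let $\mathbb{X},\mathbb{Y}$ be two-dimensional smooth real Banach spaces, with $\mathbb{Y}$ in addition strictly convex. Let $T\in\mathbb{L}(\mathbb{X},\mathbb{Y})$ have rank two, $\|T\|=1$ and $M_T=\{\pm x\}$. Let $y\in x^\perp\cap S_{\mathbb{X}}$; then $0<\|Ty\|<1$, and set $w=Ty/\|Ty\|$. Then $T$ is not an extreme contraction if and only if $(x,Tx)$ is a $\mu$-CPP with respect to the pair $(y,w)$ for some $\mu>\|Ty\|$.
   Context: $M_T=\{x\in S_{\mathbb{X}}:\|Tx\|=\|T\|\}$. A norm one $T$ is an extreme contraction if it is an extreme point of the closed unit ball of $\mathbb{L}(\mathbb{X},\mathbb{Y})$. $B(x,r)=\{u:\|u-x\|<r\}$. $x\perp_B y$ means $\|x+\lambda y\|\ge\|x\|$ for all real $\lambda$; $x^\perp=\{y:x\perp_By\}$. For $x\in S_{\mathbb{X}}$, $y'\in S_{\mathbb{Y}}$, $z_0\in x^\perp\cap S_{\mathbb{X}}$, $w_0\in y'^\perp\cap S_{\mathbb{Y}}$ and $\mu>0$, $(x,y')$ is a $\mu$-CPP with respect to $(z_0,w_0)$ if there exists $r>0$ such that for all $a,b\in\mathbb{R}$, $ax+bz_0\in B(x,r)\cap S_{\mathbb{X}}$ implies $\|ay'+b\mu w_0\|\le1$. *)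

(* Defs.v *)
From HB Require Import structures.
From mathcomp Require Import all_boot all_order all_algebra.
From mathcomp Require Import all_classical all_reals all_analysis.
Set Implicit Arguments. Unset Strict Implicit. Unset Printing Implicit Defensive.
Import Order.TTheory GRing.Theory Num.Theory.
Import numFieldNormedType.Exports.
Local Open Scope classical_set_scope.
Local Open Scope ring_scope.

Section Defs.
Variable R : realType.

Definition is_linear_map (X Y : normedModType R) (T : X -> Y) : Prop :=
  forall (a : R) (u v : X), T (a *: u + v) = a *: T u + T v.

Definition is_linear_functional (X : normedModType R) (f : X -> R) : Prop :=
  forall (a : R) (u v : X), f (a *: u + v) = a * f u + f v.

Definition lin_indep2 (X : normedModType R) (u v : X) : Prop :=
  forall a b : R, a *: u + b *: v = 0 -> a = 0 /\ b = 0.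

Definition dim_two (X : normedModType R) : Prop :=
  exists e1 e2 : X, lin_indep2 e1 e2 /\
    forall z : X, exists a b : R, z = a *: e1 + b *: e2.

Definition supporting_functional (X : normedModType R) (x : X) (f : X -> R) : Prop :=
  is_linear_functional f /\ (forall z : X, `|f z| <= `|z|) /\ f x = 1.

Definition smooth (X : normedModType R) : Prop :=
  forall x : X, `|x| = 1 ->
    forall f g : X -> R, supporting_functional x f -> supporting_functional x g -> f = g.

Definition strictly_convex (X : normedModType R) : Prop :=
  forall x y : X, `|x| = 1 -> `|y| = 1 -> x <> y -> `|(2%:R)^-1 *: (x + y)| < 1.

Definition opnorm (X Y : normedModType R) (T : X -> Y) : R :=
  sup [set `|T z| | z in [set z : X | `|z| = 1]].

Definition norm_attainment_set (X Y : normedModType R) (T : X -> Y) : set X :=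
  [set z : X | `|z| = 1 /\ `|T z| = opnorm T].

Definition rank_two (X Y : normedModType R) (T : X -> Y) : Prop :=
  (exists u v : X, lin_indep2 (T u) (T v)) /\
  (forall u v w : X, exists a b c : R, (a != 0 \/ b != 0 \/ c != 0) /\
      a *: T u + b *: T v + c *: T w = 0).

Definition extreme_contraction (X Y : normedModType R) (T : X -> Y) : Prop :=
  opnorm T = 1 /\
  forall (T1 T2 : X -> Y) (t : R),
    is_linear_map T1 -> is_linear_map T2 ->
    opnorm T1 <= 1 -> opnorm T2 <= 1 -> 0 < t < 1 ->
    T = (fun z => t *: T1 z + (1 - t) *: T2 z) -> T1 = T2.

Definition BJ_orth (X : normedModType R) (x y : X) : Prop :=
  forall lambda : R, `|x| <= `|x + lambda *: y|.

Definition mu_CPP (X Y : normedModType R) (x : X) (y' : Y) (z0 : X) (w0 : Y)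
    (mu : R) : Prop :=
  [/\ `|x| = 1, `|y'| = 1, BJ_orth x z0 /\ `|z0| = 1,
      BJ_orth y' w0 /\ `|w0| = 1 & 0 < mu] /\
  exists r : R, 0 < r /\
    forall a b : R,
      `|a *: x + b *: z0 - x| < r -> `|a *: x + b *: z0| = 1 ->
      `|a *: y' + (b * mu) *: w0| <= 1.

End Defs.

(* Main.v *)
Require Import Defs.
From HB Require Import structures.
From mathcomp Require Import all_boot all_order all_algebra.
From mathcomp Require Import all_classical all_reals all_analysis.
From mathcomp Require Import ring lra.
Import Order.TTheory GRing.Theory Num.Theory.
Import numFieldNormedType.Exports.
Local Open Scope classical_set_scope.
Local Open Scope ring_scope.
Set Implicit Arguments. Unset Strict Implicit.



Lemma comb2 (R : realType) (X : normedModType R) (e1 e2 : X) a b p1 p2 q1 q2 :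
  a *: (p1 *: e1 + p2 *: e2) + b *: (q1 *: e1 + q2 *: e2) =
  (a * p1 + b * q1) *: e1 + (a * p2 + b * q2) *: e2.
Proof.
by rewrite !scalerDr !scalerA !scalerDl addrACA.
Qed.

Lemma indep_span (R : realType) (X : normedModType R) (u v : X) :
  dim_two X -> lin_indep2 u v -> forall z : X, exists a b : R, z = a *: u + b *: v.
Proof.
move=> [e1 [e2 [_ He]]] Huv z.
have [p1 [p2 Hu]] := He u; have [q1 [q2 Hv]] := He v.
have [al [be Hz]] := He z.
have Hd : p1 * q2 - p2 * q1 != 0.
  apply/eqP => Hd.
  have H1 : q2 *: u + (- p2) *: v = 0.
    rewrite Hu Hv comb2.
    have -> : q2 * p1 + - p2 * q1 = 0 by rewrite -Hd; ring.
    have -> : q2 * p2 + - p2 * q2 = 0 by ring.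
    by rewrite !scale0r addr0.
  have H2 : q1 *: u + (- p1) *: v = 0.
    rewrite Hu Hv comb2.
    have -> : q1 * p2 + - p1 * q2 = 0 by rewrite -oppr0 -Hd; ring.
    have -> : q1 * p1 + - p1 * q1 = 0 by ring.
    by rewrite !scale0r addr0.
  have [E1 E2] := Huv _ _ H1; have [E3 E4] := Huv _ _ H2.
  have Hu0 : u = 0.
    rewrite Hu; have -> : p2 = 0 by rewrite -[p2]opprK E2 oppr0.
    have -> : p1 = 0 by rewrite -[p1]opprK E4 oppr0.
    by rewrite !scale0r addr0.
  have := Huv 1 0; rewrite Hu0 scaler0 scale0r addr0 => /(_ erefl) [] /eqP.
  by rewrite oner_eq0.
set d := p1 * q2 - p2 * q1 in Hd.
exists ((al * q2 - be * q1) / d), ((be * p1 - al * p2) / d).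
rewrite Hz Hu Hv comb2; congr (_ *: _ + _ *: _); rewrite /d; field => //.
Qed.



Lemma lin0 (R : realType) (X Y : normedModType R) (T : X -> Y) :
  is_linear_map T -> T 0 = 0.
Proof.
move=> lT; have := lT 1 0 0; rewrite scaler0 addr0 scale1r => E.
by apply: (@addrI _ (T 0)); rewrite addr0 -E.
Qed.

Lemma linD (R : realType) (X Y : normedModType R) (T : X -> Y) u v :
  is_linear_map T -> T (u + v) = T u + T v.
Proof. by move=> lT; have := lT 1 u v; rewrite !scale1r. Qed.

Lemma linZ (R : realType) (X Y : normedModType R) (T : X -> Y) a u :
  is_linear_map T -> T (a *: u) = a *: T u.
Proof. by move=> lT; rewrite -[a *: u]addr0 lT lin0 // addr0. Qed.

Lemma lin2 (R : realType) (X Y : normedModType R) (T : X -> Y) a b u v :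
  is_linear_map T -> T (a *: u + b *: v) = a *: T u + b *: T v.
Proof. by move=> lT; rewrite lT linZ. Qed.

Lemma uniq2 (R : realType) (X : normedModType R) (u v : X) a b c d :
  lin_indep2 u v -> a *: u + b *: v = c *: u + d *: v -> a = c /\ b = d.
Proof.
move=> H E.
have : (a - c) *: u + (b - d) *: v = 0.
  by rewrite !scalerBl addrACA E -opprD subrr.
by move/H => [/eqP + /eqP]; rewrite !subr_eq0 => /eqP -> /eqP ->.
Qed.

Lemma comb1 (R : realType) (X : normedModType R) (e1 e2 : X) a p1 p2 q1 q2 :
  a *: (p1 *: e1 + p2 *: e2) + (q1 *: e1 + q2 *: e2) =
  (a * p1 + q1) *: e1 + (a * p2 + q2) *: e2.
Proof. by rewrite !scalerDr !scalerA !scalerDl addrACA. Qed.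

Lemma coords (R : realType) (X : normedModType R) (u v : X) :
  dim_two X -> lin_indep2 u v ->
  exists fa fb : X -> R, (forall z, z = fa z *: u + fb z *: v) /\
    is_linear_functional fa /\ is_linear_functional fb /\
    fa u = 1 /\ fb u = 0 /\ fa v = 0 /\ fb v = 1.
Proof.
move=> d2 H.
have /choice [f Hf] : forall z : X, exists p : R * R, z = p.1 *: u + p.2 *: v.
  by move=> z; have [a [b ->]] := indep_span d2 H z; exists (a, b).
exists (fun z => (f z).1), (fun z => (f z).2); split => //.
have key : forall a z w, (f (a *: z + w)).1 = a * (f z).1 + (f w).1 /\
                         (f (a *: z + w)).2 = a * (f z).2 + (f w).2.
  move=> a z w; apply: (uniq2 H); rewrite -Hf {1}(Hf z) {1}(Hf w).
  by rewrite comb1.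
split; first by move=> a z w; case: (key a z w).
split; first by move=> a z w; case: (key a z w).
have [Hu1 Hu2] : (f u).1 = 1 /\ (f u).2 = 0.
  by apply: (uniq2 H); rewrite -Hf scale1r scale0r addr0.
have [Hv1 Hv2] : (f v).1 = 0 /\ (f v).2 = 1.
  by apply: (uniq2 H); rewrite -Hf scale1r scale0r add0r.
by [].
Qed.

Lemma bj_coef (R : realType) (X : normedModType R) (x v : X) a b :
  `|x| = 1 -> BJ_orth x v -> `|a| <= `|a *: x + b *: v|.
Proof.
move=> nx H; have [->|a0] := eqVneq a 0; first by rewrite normr0.
have -> : a *: x + b *: v = a *: (x + (b / a) *: v).
  by rewrite scalerDr scalerA mulrCA mulfV // mulr1.
rewrite normrZ -{1}[`|a|]mulr1 ler_wpM2l //; rewrite -nx; exact: H.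
Qed.

Lemma bj_indep (R : realType) (X : normedModType R) (x v : X) :
  `|x| = 1 -> BJ_orth x v -> v != 0 -> lin_indep2 x v.
Proof.
move=> nx H v0 a b E.
have a0 : a = 0.
  apply/eqP; rewrite -normr_eq0 eq_le normr_ge0 andbT.
  by have := bj_coef a b nx H; rewrite E normr0.
split => //; move: E; rewrite a0 scale0r add0r => /eqP.
by rewrite scaler_eq0 (negbTE v0) orbF => /eqP.
Qed.

Lemma bj_scale (R : realType) (X : normedModType R) (x v : X) c :
  BJ_orth x v -> BJ_orth x (c *: v).
Proof. by move=> H l; rewrite scalerA; exact: H. Qed.

Lemma cont_line (R : realType) (V : normedModType R) (p q : V) :
  continuous (fun t : R => `|t *: q + p|).
Proof.
move=> t.
apply: (@continuous_comp _ _ _ (fun t : R => t *: q + p) (fun v : V => `|v|)).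
  apply: continuousD; first exact: scalel_continuous.
  exact: cst_continuous.
exact: norm_continuous.
Qed.



Lemma normalize (R : realType) (X : normedModType R) (z : X) :
  z != 0 -> `| `|z|^-1 *: z| = 1 /\ z = `|z| *: (`|z|^-1 *: z).
Proof.
move=> z0; have nz : `|z| != 0 by rewrite normr_eq0.
split; first by rewrite normrZ normfV normr_id mulVf.
by rewrite scalerA mulfV // scale1r.
Qed.

Lemma opnorm_bound (R : realType) (X Y : normedModType R) (T : X -> Y) :
  is_linear_map T ->
  has_ubound [set `|T z| | z in [set z : X | `|z| = 1]] ->
  opnorm T <= 1 -> forall z, `|T z| <= `|z|.
Proof.
move=> lT hub n1 z.
have unit : forall u : X, `|u| = 1 -> `|T u| <= 1.
  move=> u nu; apply: le_trans n1; apply: (ub_le_sup hub); by exists u.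
have [->|z0] := eqVneq z 0; first by rewrite lin0 // !normr0.
have [n1' Ez] := normalize z0.
rewrite {1}Ez linZ // normrZ normr_id -[X in _ <= X]mulr1.
by rewrite ler_pM2l ?normr_gt0 //; exact: unit.
Qed.

Lemma opnorm1_ub (R : realType) (X Y : normedModType R) (T : X -> Y) :
  opnorm T = 1 -> has_ubound [set `|T z| | z in [set z : X | `|z| = 1]].
Proof.
move=> n1; apply: contrapT => hub.
have : ~ has_sup [set `|T z| | z in [set z : X | `|z| = 1]] by case.
by move/sup_out; rewrite -/(opnorm T) n1 => /eqP; rewrite oner_eq0.
Qed.

Lemma opnorm_le (R : realType) (X Y : normedModType R) (T : X -> Y) (x0 : X) :
  `|x0| = 1 -> (forall z, `|z| = 1 -> `|T z| <= 1) -> opnorm T <= 1.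
Proof.
move=> nx H; apply: ge_sup; first by exists `|T x0|, x0.
by move=> _ [z nz <-]; exact: H.
Qed.

Lemma lin_bounded (R : realType) (X Y : normedModType R) (S : X -> Y) (x y : X) :
  dim_two X -> is_linear_map S -> `|x| = 1 -> BJ_orth x y -> `|y| = 1 ->
  has_ubound [set `|S z| | z in [set z : X | `|z| = 1]].
Proof.
move=> d2 lS nx bj ny.
have y0 : y != 0 by rewrite -normr_eq0 ny oner_eq0.
have [a [b [Hz _]]] := coords d2 (bj_indep nx bj y0).
exists (`|S x| + 2 * `|S y|) => _ [z nz <-].
have Ha : `|a z| <= 1 by rewrite -nz {2}(Hz z); exact: bj_coef.
have Hb : `|b z| <= 2.
  have E : b z *: y = z - a z *: x by rewrite {2}(Hz z) addrAC subrr add0r.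
  have -> : `|b z| = `|b z *: y| by rewrite normrZ ny mulr1.
  rewrite E; apply: le_trans (ler_normB _ _) _.
  by rewrite normrZ nx mulr1 nz; lra.
rewrite (Hz z) lin2 //; apply: le_trans (ler_normD _ _) _.
rewrite !normrZ; apply: lerD.
  by rewrite -[X in _ <= X]mul1r; apply: ler_wpM2r.
by apply: ler_wpM2r.
Qed.



Lemma h2bound1 (R : realType) (X : normedModType R) (x v : X) (k c : R) :
  `|x| = 1 -> BJ_orth x v ->
  (forall l, 0 <= l -> 1 + k * l <= `|x + l *: v|) ->
  0 < c -> c <= k -> c <= `|v| ->
  forall a b, a + c * b <= `|a *: x + b *: v|.
Proof.
move=> nx bj grow c0 ck cv a b.
have [a0|a0] := ltrP 0 a; have [b0|b0] := ltrP b 0.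
- have := bj_coef a b nx bj; rewrite gtr0_norm //.
  have : c * b <= 0 by nra.
  lra.
- have E : a *: x + b *: v = a *: (x + (b / a) *: v).
    by rewrite scalerDr scalerA mulrCA mulfV ?gt_eqF // mulr1.
  rewrite E normrZ gtr0_norm //.
  have G := grow (b / a) (divr_ge0 b0 (ltW a0)).
  have H2 : a * (1 + k * (b / a)) <= a * `|x + (b / a) *: v|.
    by rewrite ler_pM2l.
  have Eq : a * (1 + k * (b / a)) = a + k * b by field; rewrite gt_eqF.
  have : c * b <= k * b by nra.
  lra.
- have : c * b <= 0 by nra.
  have := normr_ge0 (a *: x + b *: v).
  lra.
- have H1 : `|b *: v| <= `|a *: x + b *: v| + `|a *: x|.
    have E' : b *: v = (a *: x + b *: v) - a *: x by rewrite addrAC subrr add0r.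
    rewrite {1}E'; exact: ler_normB.
  move: H1; rewrite !normrZ nx mulr1 ger0_norm // ler0_norm //.
  have : c * b <= `|v| * b by nra.
  nra.
Qed.

Lemma h2bound (R : realType) (X : normedModType R) (x v : X) (k c : R) :
  `|x| = 1 -> BJ_orth x v ->
  (forall l, 0 <= l -> 1 + k * l <= `|x + l *: v|) ->
  0 < c -> c <= k -> c <= `|v| ->
  forall a b, `|a + c * b| <= `|a *: x + b *: v|.
Proof.
move=> nx bj grow c0 ck cv a b.
rewrite ler_norml (h2bound1 nx bj grow c0 ck cv) andbT.
have := h2bound1 nx bj grow c0 ck cv (- a) (- b).
rewrite !scaleNr -opprD normrN; lra.
Qed.

Lemma smooth_orth (R : realType) (X Y : normedModType R) (S : X -> Y) (x y : X) :
  dim_two X -> smooth X -> is_linear_map S -> (forall z, `|S z| <= `|z|) ->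
  `|x| = 1 -> `|S x| = 1 -> BJ_orth x y -> y != 0 -> BJ_orth (S x) (S y).
Proof.
move=> d2 smX lS bS nx nSx bj y0 l0.
rewrite nSx; apply: contrapT => /negP; rewrite -ltNge => hl.
have l00 : l0 != 0 by apply: contraTneq hl => ->; rewrite scale0r addr0 nSx ltxx.
set v := (- l0) *: y.
have v0 : v != 0 by rewrite scaler_eq0 negb_or oppr_eq0 l00 y0.
have bjv : BJ_orth x v by exact: bj_scale.
have Hsv : S x + l0 *: S y = S x - S v by rewrite /v (linZ (T:=S)) // scaleNr opprK.
set k := 1 - `|S x - S v|.
have k0 : 0 < k by rewrite /k subr_gt0 -Hsv.
have grow : forall l, 0 <= l -> 1 + k * l <= `|x + l *: v|.
  move=> l l0'.
  have E : (1 + l) *: S x = S (x + l *: v) + l *: (S x - S v).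
    by rewrite (linD (T:=S)) // (linZ (T:=S)) // scalerBr addrA addrAC addrK scalerDl scale1r.
  have := ler_normD (S (x + l *: v)) (l *: (S x - S v)).
  rewrite -E !normrZ nSx mulr1 (ger0_norm l0') ger0_norm; last lra.
  have := bS (x + l *: v).
  have : `|S x - S v| = 1 - k by rewrite /k; ring.
  move=> ->; nra.
have [fa [fb [Hz [lfa [lfb [fax [fbx [fav fbv]]]]]]]] := coords d2 (bj_indep nx bjv v0).
set c := Num.min k `|v|.
have c0 : 0 < c by rewrite lt_min k0 normr_gt0.
have ck : c <= k by rewrite ge_min lexx.
have cv : c <= `|v| by rewrite ge_min lexx orbT.
have sf1 : supporting_functional x fa.
  split=> //; split=> // z; rewrite {2}(Hz z); exact: bj_coef.
have sf2 : supporting_functional x (fun z => fa z + c * fb z).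
  split; first by move=> a u w; rewrite lfa lfb; ring.
  split; last by rewrite fax fbx mulr0 addr0.
  move=> z /=; rewrite [X in _ <= `|X|](Hz z); exact: (h2bound nx bjv grow).
have := smX x nx _ _ sf1 sf2 => /(congr1 (fun f => f v)).
rewrite fav fbv mulr1 add0r => c00.
by move: c0; rewrite -c00 ltxx.
Qed.



Lemma orth_span (R : realType) (Y : normedModType R) (e p q : Y) :
  dim_two Y -> smooth Y -> `|e| = 1 -> BJ_orth e p -> BJ_orth e q ->
  lin_indep2 e p -> exists be : R, q = be *: p.
Proof.
move=> d2 smY ne bjp bjq ind.
have [fa [fb [Hz [lfa [lfb [fae [fbe [fap fbp]]]]]]]] := coords d2 ind.
have Hq := Hz q; set al := fa q in Hq; set be := fb q in Hq.
suff al0 : al = 0 by exists be; rewrite Hq al0 scale0r add0r.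
have [be0|be0] := eqVneq be 0.
  apply/eqP; apply: contraT => al0.
  have := bjq (- al^-1).
  rewrite Hq be0 scale0r addr0 scalerA mulNr mulVf // scaleN1r subrr normr0 ne.
  by rewrite ler10.
have sf1 : supporting_functional e fa.
  split=> //; split=> // z; rewrite {2}(Hz z); exact: bj_coef.
have sf2 : supporting_functional e (fun z => fa z - al / be * fb z).
  split; first by move=> a u w; rewrite lfa lfb; ring.
  split; last by rewrite fae fbe mulr0 subr0.
  move=> z /=.
  have Ez : z = (fa z - al / be * fb z) *: e + (fb z / be) *: q.
    rewrite {1}(Hz z) Hq scalerDr !scalerA addrA -scalerDl.
    by congr (_ *: _ + _ *: _); field.
  rewrite [X in _ <= `|X|]Ez; exact: bj_coef.
have := smY e ne _ _ sf1 sf2 => /(congr1 (fun f => f p)).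
rewrite fap fbp mulr1 sub0r => /eqP; rewrite eq_sym oppr_eq0 mulf_eq0 invr_eq0.
by rewrite (negbTE be0) orbF => /eqP.
Qed.

Lemma sc_comb (R : realType) (Y : normedModType R) (u v : Y) (t : R) :
  strictly_convex Y -> `|u| <= 1 -> `|v| <= 1 -> 0 < t -> t < 1 ->
  `|t *: u + (1 - t) *: v| = 1 -> u = v.
Proof.
move=> sc nu nv t0 t1 n1.
have tri := ler_normD (t *: u) ((1 - t) *: v).
rewrite n1 !normrZ (gtr0_norm t0) (gtr0_norm (_ : 0 < 1 - t)) in tri; last lra.
have nu1 : `|u| = 1 by apply/eqP; rewrite eq_le nu /=; nra.
have nv1 : `|v| = 1 by apply/eqP; rewrite eq_le nv /=; nra.
apply: contrapT => uv.
have hm := sc u v nu1 nv1 uv.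
set m := 2^-1 *: (u + v) in hm.
have [th|th] := lerP t (2^-1).
  have E : t *: u + (1 - t) *: v = (2 * t) *: m + (1 - 2 * t) *: v.
    rewrite /m scalerA (_ : 2 * t * 2^-1 = t); last by field.
    rewrite scalerDr -addrA -scalerDl; congr (_ + _ *: _); ring.
  have := ler_normD ((2 * t) *: m) ((1 - 2 * t) *: v).
  have h1 : `|2 * t| = 2 * t by rewrite ger0_norm //; lra.
  have h2 : `|1 - 2 * t| = 1 - 2 * t by rewrite ger0_norm //; lra.
  rewrite -E n1 (normrZ (2 * t)) (normrZ (1 - 2 * t)) nv1 h1 h2.
  nra.
have E : t *: u + (1 - t) *: v = (2 * (1 - t)) *: m + (2 * t - 1) *: u.
  rewrite /m scalerA (_ : 2 * (1 - t) * 2^-1 = 1 - t); last by field.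
  rewrite scalerDr addrAC -scalerDl; congr (_ *: _ + _); ring.
have := ler_normD ((2 * (1 - t)) *: m) ((2 * t - 1) *: u).
have h1 : `|2 * (1 - t)| = 2 * (1 - t) by rewrite ger0_norm //; lra.
have h2 : `|2 * t - 1| = 2 * t - 1 by rewrite ger0_norm //; lra.
rewrite -E n1 (normrZ (2 * (1 - t))) (normrZ (2 * t - 1)) nu1 h1 h2.
nra.
Qed.



Lemma near_bound (R : realType) (X Y : normedModType R) (T : X -> Y) (x y : X)
  (w : Y) (mu r t nu : R) :
  `|x| = 1 -> BJ_orth x y -> `|y| = 1 -> `|T x| = 1 -> 0 < mu ->
  (forall a b, `|a *: x + b *: y - x| < r -> `|a *: x + b *: y| = 1 ->
     `|a *: T x + (b * mu) *: w| <= 1) ->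
  2 * `|t| < r -> 0 <= nu -> nu <= mu ->
  `|T x + (t * nu) *: w| <= `|x + t *: y|.
Proof.
move=> nx bj ny nTx mu0 Hc tr nu0 numu.
set Nt := `|x + t *: y|.
have N1 : 1 <= Nt by have := bj_coef 1 t nx bj; rewrite scale1r normr1.
have N2 : Nt <= 1 + `|t|.
  by apply: le_trans (ler_normD _ _) _; rewrite normrZ ny mulr1 nx.
have Np : 0 < Nt by lra.
have Nn : Nt != 0 by rewrite gt_eqF.
have E1 : Nt^-1 *: x + (t * Nt^-1) *: y = Nt^-1 *: (x + t *: y).
  by rewrite scalerDr scalerA mulrC.
have n1 : `|Nt^-1 *: x + (t * Nt^-1) *: y| = 1.
  by rewrite E1 normrZ normfV (gtr0_norm Np) mulVf.
have d : `|Nt^-1 *: x + (t * Nt^-1) *: y - x| < r.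
  have E2 : Nt^-1 *: (x + t *: y) - x = Nt^-1 *: ((x - Nt *: x) + t *: y).
    by rewrite addrAC scalerBr scalerA mulVf // scale1r.
  rewrite E1 E2 normrZ normfV (gtr0_norm Np).
  set V := `|(x - Nt *: x) + t *: y|.
  have HV : V <= Nt - 1 + `|t|.
    apply: le_trans (ler_normD _ _) _.
    have -> : x - Nt *: x = (1 - Nt) *: x by rewrite scalerBl scale1r.
    by rewrite !normrZ nx ny !mulr1 ler0_norm; lra.
  have Hq : Nt * (Nt^-1 * V) = V by rewrite mulrA mulfV // mul1r.
  have V0 : 0 <= V by exact: normr_ge0.
  have q0 : 0 <= Nt^-1 * V by rewrite mulr_ge0 // invr_ge0 ltW.
  nra.
have := Hc _ _ d n1.
have E3 : Nt^-1 *: T x + (t * Nt^-1 * mu) *: w = Nt^-1 *: (T x + (t * mu) *: w).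
  by rewrite scalerDr scalerA; congr (_ + _ *: _); ring.
rewrite E3 normrZ normfV (gtr0_norm Np) => HM.
have HM' : `|T x + (t * mu) *: w| <= Nt.
  have Hq : Nt * (Nt^-1 * `|T x + (t * mu) *: w|) = `|T x + (t * mu) *: w|.
    by rewrite mulrA mulfV // mul1r.
  nra.
set th := nu / mu.
have th0 : 0 <= th by rewrite divr_ge0 // ltW.
have th1 : th <= 1 by rewrite ler_pdivrMr // mul1r.
have E4 : T x + (t * nu) *: w = (1 - th) *: T x + th *: (T x + (t * mu) *: w).
  rewrite scalerDr scalerA addrA -scalerDl (_ : 1 - th + th = 1); last ring.
  rewrite scale1r; congr (_ + _ *: _); rewrite /th; field; exact: lt0r_neq0.
rewrite E4; apply: le_trans (ler_normD _ _) _.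
rewrite (normrZ (1 - th)) (normrZ th) nTx mulr1 (ger0_norm th0) ger0_norm; last lra.
nra.
Qed.



Lemma cont_diff (R : realType) (X Y : normedModType R) (p q : Y) (p' q' : X) :
  continuous (fun t : R => `|t *: q + p| - `|t *: q' + p'|).
Proof.
move=> t; apply: cvgB; [exact: cont_line | exact: cont_line].
Qed.

Lemma far_gap (R : realType) (X Y : normedModType R) (T : X -> Y) (x y : X) (d : R) :
  0 < d -> d <= 1 -> is_linear_map T ->
  (forall a b, b != 0 -> `|T (a *: x + b *: y)| < `|a *: x + b *: y|) ->
  exists eta, 0 < eta /\
   (forall t, d <= `|t| -> `|t| <= 1 -> `|T x + t *: T y| <= `|x + t *: y| - eta) /\
   (forall a, `|a| <= 1 -> `|a *: T x + T y| <= `|a *: x + y| - eta).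
Proof.
move=> d0 d1 lT st.
pose g1 := fun t : R => `|t *: T y + T x| - `|t *: y + x|.
pose g2 := fun t : R => `|t *: T x + T y| - `|t *: x + y|.
have cg1 : continuous g1 by exact: cont_diff.
have cg2 : continuous g2 by exact: cont_diff.
have g1neg : forall t, t != 0 -> g1 t < 0.
  move=> t t0; rewrite /g1 subr_lt0 (addrC (t *: T y)) (addrC (t *: y)).
  have := st 1 t t0; by rewrite (lin2 (T:=T)) // !scale1r.
have g2neg : forall t, g2 t < 0.
  move=> t; rewrite /g2 subr_lt0.
  have := st t 1 (oner_neq0 _); by rewrite (lin2 (T:=T)) // !scale1r.
have [c1 c1in Hc1] := EVT_max d1 (continuous_subspaceT cg1).
have [c2 c2in Hc2] := @EVT_max _ g1 (-1) (-d) ltac:(lra) (continuous_subspaceT cg1).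
have [c3 c3in Hc3] := @EVT_max _ g2 (-1) 1 ltac:(lra) (continuous_subspaceT cg2).
move: c1in c2in; rewrite !in_itv /= => /andP[c1a c1b] /andP[c2a c2b].
have n1 : g1 c1 < 0 by apply: g1neg; rewrite gt_eqF //; lra.
have n2 : g1 c2 < 0 by apply: g1neg; rewrite lt_eqF //; lra.
have n3 := g2neg c3.
exists (Num.min (- g1 c1) (Num.min (- g1 c2) (- g2 c3))).
split; first by rewrite !lt_min !oppr_gt0 n1 n2 n3.
split.
  move=> t dt t1.
  have : g1 t <= - Num.min (- g1 c1) (Num.min (- g1 c2) (- g2 c3)).
    have [tp|tn] := lerP 0 t.
      apply: le_trans (Hc1 t _) _; first by rewrite in_itv /=; move: dt t1; rewrite ger0_norm // => -> ->.
      by rewrite lerNr ge_min lexx.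
    apply: le_trans (Hc2 t _) _; first by rewrite in_itv /=; move: dt t1; rewrite ltr0_norm //; lra.
    by rewrite lerNr !ge_min lexx orbT.
  by rewrite /g1 (addrC (t *: T y)) (addrC (t *: y)); lra.
move=> a a1.
have : g2 a <= - Num.min (- g1 c1) (Num.min (- g1 c2) (- g2 c3)).
  apply: le_trans (Hc3 a _) _; first by rewrite in_itv /=; move: a1; rewrite ler_norml.
  by rewrite lerNr !ge_min lexx !orbT.
by rewrite /g2; lra.
Qed.



Lemma lin_coord (R : realType) (X Y : normedModType R) (fa fb : X -> R) (p q : Y) c :
  is_linear_functional fa -> is_linear_functional fb ->
  is_linear_map (fun z => fa z *: p + (fb z * c) *: q).
Proof.
move=> la lb a u v; rewrite la lb mulrDl !scalerDl scalerDr !scalerA mulrA.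
by rewrite addrACA.
Qed.

Lemma back_dir (R : realType) (X Y : normedModType R) (T : X -> Y) (x y : X) (mu r : R) :
  dim_two X -> is_linear_map T -> `|x| = 1 -> `|T x| = 1 -> BJ_orth x y -> `|y| = 1 ->
  (forall a b, b != 0 -> `|T (a *: x + b *: y)| < `|a *: x + b *: y|) ->
  0 < `|T y| -> `|T y| < mu -> 0 < r ->
  (forall a b, `|a *: x + b *: y - x| < r -> `|a *: x + b *: y| = 1 ->
     `|a *: T x + (b * mu) *: (`|T y|^-1 *: T y)| <= 1) ->
  exists T1 T2 : X -> Y, [/\ is_linear_map T1, is_linear_map T2, opnorm T1 <= 1,
     opnorm T2 <= 1 & T = (fun z => 2^-1 *: T1 z + (1 - 2^-1) *: T2 z) /\ T1 <> T2].
Proof.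
move=> d2 lT nx nTx bj ny st s0 smu r0 Hc.
set s := `|T y| in s0 smu Hc; set w := s^-1 *: T y in Hc.
have sn : s != 0 by rewrite gt_eqF.
have nw : `|w| = 1 by rewrite /w normrZ normfV (ger0_norm (ltW s0)) mulVf.
have Tyw : T y = s *: w by rewrite /w scalerA mulfV // scale1r.
clearbody w.
have y0 : y != 0 by rewrite -normr_eq0 ny oner_eq0.
have [fa [fb [Hz [lfa [lfb [fax [fbx [fay fby]]]]]]]] := coords d2 (bj_indep nx bj y0).
set d := Num.min (r / 4) 1.
have d0 : 0 < d by rewrite lt_min ltr01 andbT divr_gt0.
have d1 : d <= 1 by rewrite ge_min lexx orbT.
have dr : d <= r / 4 by rewrite ge_min lexx.
have [eta [eta0 [F1 F2]]] := far_gap d0 d1 lT st.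
set e := Num.min eta (Num.min s (mu - s)).
have e0 : 0 < e by rewrite !lt_min eta0 s0 subr_gt0 smu.
have e1 : e <= eta by rewrite ge_min lexx.
have e2 : e <= s by rewrite !ge_min lexx orbT.
have e3 : e <= mu - s by rewrite !ge_min lexx !orbT.
have key : forall nu, s - e <= nu -> nu <= s + e ->
    forall a b, `|a *: T x + (b * nu) *: w| <= `|a *: x + b *: y|.
  move=> nu n1 n2.
  have nu0 : 0 <= nu by lra.
  have numu : nu <= mu by lra.
  have hnu : `|nu - s| <= e by rewrite ler_norml; lra.
  have A : forall t, `|t| <= 1 -> `|T x + (t * nu) *: w| <= `|x + t *: y|.
    move=> t t1; have [td|td] := ltrP `|t| d.
      by apply: (near_bound nx bj ny nTx _ Hc) => //; lra.
    have := F1 t td t1.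
    have E : T x + (t * nu) *: w = (T x + t *: T y) + (t * (nu - s)) *: w.
      by rewrite Tyw scalerA -addrA -scalerDl; congr (_ + _ *: _); ring.
    rewrite E => h; apply: le_trans (ler_normD _ _) _.
    rewrite normrZ nw mulr1 normrM.
    have : `|t| * `|nu - s| <= e by nra.
    lra.
  have B : forall a, `|a| <= 1 -> `|a *: T x + nu *: w| <= `|a *: x + y|.
    move=> a a1; have := F2 a a1.
    have E : a *: T x + nu *: w = (a *: T x + T y) + (nu - s) *: w.
      by rewrite Tyw -addrA -scalerDl; congr (_ + _ *: _); ring.
    rewrite E => h; apply: le_trans (ler_normD _ _) _.
    rewrite normrZ nw mulr1; lra.
  move=> a b; have [hab|hab] := lerP `|b| `|a|.
    have [a0|a0] := eqVneq a 0.
      have b0 : b = 0 by apply/eqP; rewrite -normr_le0 -(normr0 R) -a0.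
      by rewrite a0 b0 mul0r !scale0r addr0 normr0.
    have E1 : a *: T x + (b * nu) *: w = a *: (T x + (b / a * nu) *: w).
      by rewrite scalerDr scalerA; congr (_ + _ *: _); field.
    have E2 : a *: x + b *: y = a *: (x + (b / a) *: y).
      by rewrite scalerDr scalerA; congr (_ + _ *: _); field.
    rewrite E1 E2 !normrZ; apply: ler_wpM2l => //; apply: A.
    by rewrite normrM normfV ler_pdivrMr ?normr_gt0 // mul1r.
  have b0 : b != 0 by rewrite -normr_gt0; apply: le_lt_trans hab.
  have E1 : a *: T x + (b * nu) *: w = b *: ((a / b) *: T x + nu *: w).
    by rewrite scalerDr !scalerA; congr (_ *: _ + _ *: _); field.
  have E2 : a *: x + b *: y = b *: ((a / b) *: x + y).
    by rewrite scalerDr !scalerA; congr (_ *: _ + _ *: _); field.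
  rewrite E1 E2 !normrZ; apply: ler_wpM2l => //; apply: B.
  by rewrite normrM normfV ler_pdivrMr ?normr_gt0 // mul1r ltW.
exists (fun z => fa z *: T x + (fb z * (s + e)) *: w).
exists (fun z => fa z *: T x + (fb z * (s - e)) *: w).
split.
- exact: lin_coord.
- exact: lin_coord.
- apply: (opnorm_le nx) => z nz.
  rewrite -nz [X in _ <= `|X|](Hz z); apply: key; lra.
- apply: (opnorm_le nx) => z nz.
  rewrite -nz [X in _ <= `|X|](Hz z); apply: key; lra.
split.
  apply/funext => z /=.
  rewrite {1}(Hz z) (lin2 (T:=T)) // Tyw !scalerDr !scalerA addrACA -!scalerDl.
  congr (_ *: _ + _ *: _); [by rewrite addrC subrK scale1r | by field].
have w0 : w != 0 by rewrite -normr_eq0 nw oner_eq0.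
move=> H; have := congr1 (fun f => f y) H; rewrite /= fay fby !scale0r !add0r !mul1r => /eqP.
rewrite -subr_eq0 -scalerBl scaler_eq0 (negbTE w0) orbF.
have -> : s + e - (s - e) = 2 * e by ring.
by rewrite mulf_eq0 pnatr_eq0 /= gt_eqF.
Qed.



Lemma fwd_key (R : realType) (X Y : normedModType R) (T S : X -> Y) (x y : X) (be : R) :
  is_linear_map S -> (forall z, `|S z| <= `|z|) -> `|x| = 1 -> `|T x| = 1 ->
  BJ_orth x y -> `|y| = 1 -> BJ_orth (T x) (T y) -> 0 < `|T y| ->
  S x = T x -> S y = be *: T y -> 1 < be ->
  exists mu : R, `|T y| < mu /\ mu_CPP x (T x) y (`|T y|^-1 *: T y) mu.
Proof.
move=> lS bS nx nTx bj ny bjT s0 Sx Sy be1.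
exists (be * `|T y|); split; first nra.
split.
  split; [done | done | by split | split | ].
  - exact: bj_scale.
  - by rewrite normrZ normfV normr_id mulVf // gt_eqF.
  - by rewrite mulr_gt0 //; lra.
exists 1; split => // a b _ nab.
have E : a *: T x + (b * (be * `|T y|)) *: (`|T y|^-1 *: T y) = S (a *: x + b *: y).
  rewrite (lin2 (T:=S)) // Sx Sy !scalerA; congr (_ + _ *: _); field.
  by rewrite gt_eqF.
rewrite E -nab; exact: bS.
Qed.

Theorem mainTheorem15 (R : realType) (X Y : completeNormedModType R)
  (T : X -> Y) (x y : X) :
  dim_two X -> dim_two Y -> smooth X -> smooth Y -> strictly_convex Y ->
  is_linear_map T -> rank_two T -> opnorm T = 1 ->
  norm_attainment_set T = [set x; - x] ->
  BJ_orth x y -> `|y| = 1 ->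
  (0 < `|T y| < 1) /\
  (~ extreme_contraction T <->
   exists mu : R, `|T y| < mu /\
     mu_CPP x (T x) y (`|T y|^-1 *: T y) mu).
Proof.
move=> d2X d2Y smX smY scY lT rkT nT MT bj ny.
have [nx nTx] : `|x| = 1 /\ `|T x| = 1.
  have : norm_attainment_set T x by rewrite MT; left.
  by case=> h1 h2; split => //; rewrite h2 nT.
have y0 : y != 0 by rewrite -normr_eq0 ny oner_eq0.
have ind := bj_indep nx bj y0.
have on1 : opnorm T <= 1 by rewrite nT.
have bT := opnorm_bound lT (opnorm1_ub nT) on1.
have [fa [fb [Hz [lfa [lfb [fax [fbx [fay fby]]]]]]]] := coords d2X ind.
have Ty0 : T y != 0.
  apply/eqP => Ty0; case: rkT => [[u [v iuv]] _].
  have Tz : forall z, T z = fa z *: T x.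
    by move=> z; rewrite {1}(Hz z) (lin2 (T:=T)) // Ty0 scaler0 addr0.
  have E : fa v *: T u + (- fa u) *: T v = 0.
    by rewrite (Tz u) (Tz v) !scalerA mulrC mulNr scaleNr subrr.
  have [_ fu0] := iuv _ _ E.
  have Tu0 : T u = 0 by rewrite (Tz u) -[fa u]opprK fu0 oppr0 scale0r.
  have := iuv 1 0; rewrite Tu0 scaler0 scale0r addr0 => /(_ erefl) [/eqP].
  by rewrite oner_eq0.
have s0 : 0 < `|T y| by rewrite normr_gt0.
have s1 : `|T y| < 1.
  rewrite lt_neqAle (le_trans (bT y)) ?ny // andbT; apply/eqP => s1.
  have : norm_attainment_set T y by split => //; rewrite nT.
  rewrite MT => -[yx|yx].
    by have := bj (-1); rewrite yx scaleN1r subrr normr0 nx ler10.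
  by have := bj 1; rewrite yx scale1r subrr normr0 nx ler10.
have orthT := smooth_orth d2X smX lT bT nx nTx bj y0.
split; first by rewrite s0 s1.
have indT := bj_indep nTx orthT Ty0.
have strict : forall a b, b != 0 ->
    `|T (a *: x + b *: y)| < `|a *: x + b *: y|.
  move=> a b b0; set z := a *: x + b *: y.
  rewrite lt_neqAle bT andbT; apply/eqP => Ez.
  have z0 : z != 0.
    by apply/eqP => z0; have [_ b0'] := ind a b z0; rewrite b0' eqxx in b0.
  have [nu Eu] := normalize z0.
  have nz : `|z| != 0 by rewrite normr_eq0.
  have : norm_attainment_set T (`|z|^-1 *: z).
    split => //; rewrite nT (linZ (T:=T)) // normrZ normfV normr_id Ez mulVf //.
  rewrite MT => -[E|E].
    have : z = `|z| *: x + 0 *: y.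
      by rewrite scale0r addr0 {1}Eu E.
    by move/(uniq2 ind) => [_ b0']; rewrite b0' eqxx in b0.
  have : z = (- `|z|) *: x + 0 *: y.
    by rewrite scale0r addr0 {1}Eu E scaleNr scalerN.
  by move/(uniq2 ind) => [_ b0']; rewrite b0' eqxx in b0.
split.
  move=> Hne; apply: contrapT => Hno; apply: Hne; split => //.
  move=> T1 T2 t l1 l2 n1 n2 /andP[t0 t1] HT; apply: contrapT => H12; apply: Hno.
  have b1 := opnorm_bound l1 (lin_bounded d2X l1 nx bj ny) n1.
  have b2 := opnorm_bound l2 (lin_bounded d2X l2 nx bj ny) n2.
  have HTx : T x = t *: T1 x + (1 - t) *: T2 x by rewrite {1}HT.
  have E12 : T1 x = T2 x.
    apply: (sc_comb scY _ _ t0 t1); first by rewrite -nx; exact: b1.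
      by rewrite -nx; exact: b2.
    by rewrite -HTx.
  have E1x : T1 x = T x by rewrite HTx -E12 -scalerDl addrC subrK scale1r.
  have E2x : T2 x = T x by rewrite -E12.
  have or1 : BJ_orth (T x) (T1 y).
    by rewrite -E1x; apply: (smooth_orth d2X smX l1 b1 nx _ bj y0); rewrite E1x.
  have or2 : BJ_orth (T x) (T2 y).
    by rewrite -E2x; apply: (smooth_orth d2X smX l2 b2 nx _ bj y0); rewrite E2x.
  have [be1 Hb1] := orth_span d2Y smY nTx orthT or1 indT.
  have [be2 Hb2] := orth_span d2Y smY nTx orthT or2 indT.
  have HTy : T y = t *: T1 y + (1 - t) *: T2 y by rewrite {1}HT.
  have Hsum : t * be1 + (1 - t) * be2 = 1.
    move: HTy; rewrite Hb1 Hb2 !scalerA -scalerDl => /eqP.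
    rewrite -subr_eq0 -{1}[T y]scale1r -scalerBl scaler_eq0 (negbTE Ty0) orbF.
    by rewrite subr_eq0 => /eqP/esym.
  have Hne12 : be1 != be2.
    apply/eqP => Eb; apply: H12; apply/funext => z.
    by rewrite (Hz z) (lin2 (T:=T1)) // (lin2 (T:=T2)) // E1x E2x Hb1 Hb2 Eb.
  have [gt1|le1] := ltrP 1 be1.
    exact: (fwd_key l1 b1 nx nTx bj ny orthT s0 E1x Hb1 gt1).
  have lt1 : be1 < 1.
    rewrite lt_neqAle le1 andbT; apply: contra Hne12 => /eqP e1; apply/eqP.
    rewrite e1 in Hsum *.
    have h : (1 - t) * (1 - be2) = 0 by rewrite mulrBr mulr1; lra.
    move/eqP: h; rewrite mulf_eq0 => /orP[|]; rewrite subr_eq0 => /eqP; lra.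
  have gt2 : 1 < be2 by nra.
  exact: (fwd_key l2 b2 nx nTx bj ny orthT s0 E2x Hb2 gt2).
move=> [mu [hmu [_ [r [r0 Hc]]]]].
have [T1 [T2 [l1 l2 n1 n2 [HT H12]]]] :=
  back_dir d2X lT nx nTx bj ny strict s0 hmu r0 Hc.
move=> [_ Hext]; apply: H12; apply: (Hext T1 T2 (2^-1)) => //.
by rewrite invr_gt0 ltr0n /= invf_lt1 // ?ltr1n // ltr0n.
Qed.
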